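(* Let $(w_k)_{k\ge0}$ be a sequence of positive real numbers and let $\mathbb{P}$ denote the law of the vertex reinforced random walk on $\mathbb{Z}$ with weight $(w_k)_{k\ge0}$ started at $0$. If under $\mathbb{P}$ the site $0$ has positive probability to be visited only finitely many times, then for every $w=(w_k(x))_{x\in\mathbb{Z},k\ge0}\in(0,\infty)^{\mathbb{Z}\times\mathbb{N}}$ such that $w_k(x)=w_k$ for all $x\ge0$ and $k\ge0$, the probability under $\mathbb{P}_w$ that $0$ is visited only at time $0$ is positive. In particular $\mathbb{P}(X_n>0 \text{ for all } n>0)>0$.
   Context: For an environment $w=(w_k(x))_{x\in\mathbb{Z},k\ge0}$ of positive reals, $\mathbb{P}_w$ is the law of the process $(X_n)_{n\ge0}$ with $X_0=0$ and, for all $n\ge0$, on $\{X_n=x\}$, $$\mathbb{P}_w(X_{n+1}=X_n\pm1\mid\mathcal{F}_n)=\frac{w_{Z_n(x\pm1)}(x\pm1)}{w_{Z_n(x-1)}(x-1)+w_{Z_n(x+1)}(x+1)},$$ where $(\mathcal{F}_n)$ is the natural filtration of $X$ and $Z_n(y)=\#\{m\le n: X_m=y\}$. The law $\mathbb{P}$ of the vertex reinforced random walk with weight $(w_k)$ is $\mathbb{P}_w$ with $w_k(x)=w_k$ for all $x,k$. *)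

(* Defs.v *)
From Stdlib Require Export Reals ZArith List.
Import ListNotations.
Open Scope R_scope.

(* An environment w = (w_k(x)) : [env_w k x] is w_k(x). *)
Definition env := nat -> Z -> R.

Fixpoint cnt (y : Z) (h : list Z) : nat :=
  match h with
  | nil => 0%nat
  | a :: t => ((if Z.eq_dec a y then 1 else 0) + cnt y t)%nat
  end.

(* Given the history h = [X_0; ...; X_n] (so that cnt y h = Z_n(y)),
   probability under P_w that X_{n+1} = X_n + 1 (up = true) or
   X_n - 1 (up = false). *)
Definition step (w : env) (h : list Z) (up : bool) : R :=
  let x := last h 0%Z in
  let a := w (cnt (x + 1)%Z h) (x + 1)%Z in
  let b := w (cnt (x - 1)%Z h) (x - 1)%Z in
  (if up then a else b) / (a + b).

Definition nextpos (x : Z) (up : bool) : Z := if up then (x + 1)%Z else (x - 1)%Z.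

Fixpoint pprob (w : env) (h : list Z) (ds : list bool) : R :=
  match ds with
  | nil => 1
  | d :: t => step w h d * pprob w (h ++ [nextpos (last h 0%Z) d]) t
  end.

Fixpoint traj (x : Z) (ds : list bool) : list Z :=
  match ds with
  | nil => nil
  | d :: t => nextpos x d :: traj (nextpos x d) t
  end.

Fixpoint allds (n : nat) : list (list bool) :=
  match n with
  | O => [nil]
  | S m => map (cons true) (allds m) ++ map (cons false) (allds m)
  end.

(* P_w(E) for an event E depending on the path (X_0, ..., X_n) only, X_0 = 0 *)
Definition prob_first (w : env) (n : nat) (E : list Z -> bool) : R :=
  fold_right Rplus 0
    (map (fun ds => if E (0%Z :: traj 0%Z ds) then pprob w [0%Z] ds else 0)
         (allds n)).

(* the path p = [X_0; ...; X_n] satisfies X_m <> 0 for all N <= m <= n *)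
Definition avoid0_from (N : nat) (p : list Z) : bool :=
  forallb (fun x => negb (Z.eqb x 0)) (skipn N p).

Definition positive_after0 (p : list Z) : bool :=
  forallb (fun x => Z.ltb 0 x) (tl p).

(* the environment of the VRRW with weight (w_k) *)
Definition const_env (ws : nat -> R) : env := fun k _ => ws k.

(* Main.v *)
Require Import Defs.
From Stdlib Require Import Reals ZArith List Lra Lia Classical.
Import ListNotations.
Open Scope R_scope.


Definition ind (E : list Z -> bool) (h : list Z) : R := if E h then 1 else 0.

Fixpoint Fr (w : env) (h : list Z) (n : nat) (g : list Z -> R) : R :=
  match n with
  | O => g h
  | S n => step w h true * Fr w (h ++ [nextpos (last h 0%Z) true]) n g
         + step w h false * Fr w (h ++ [nextpos (last h 0%Z) false]) n g
  end.

Definition PC (E : list Z -> bool) := forall h l, E (h ++ l) = true -> E h = true.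

Section S.
Variable w : env.
Hypothesis wpos : forall k x, 0 < w k x.

Lemma step_nonneg h d : 0 <= step w h d.
Proof.
  unfold step. set (a := w _ _). set (b := w _ _).
  assert (0 < a) by apply wpos. assert (0 < b) by apply wpos.
  unfold Rdiv; destruct d; apply Rmult_le_pos; try lra;
  apply Rlt_le, Rinv_0_lt_compat; lra.
Qed.

Lemma step_pos h d : 0 < step w h d.
Proof.
  unfold step. set (a := w _ _). set (b := w _ _).
  assert (0 < a) by apply wpos. assert (0 < b) by apply wpos.
  unfold Rdiv; destruct d; apply Rmult_lt_0_compat; try lra;
  apply Rinv_0_lt_compat; lra.
Qed.

Lemma step_sum h : step w h true + step w h false = 1.
Proof.
  unfold step. set (a := w _ _). set (b := w _ _).
  assert (0 < a) by apply wpos. assert (0 < b) by apply wpos.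
  field. lra.
Qed.

Lemma ind_bounds E h : 0 <= ind E h <= 1.
Proof. unfold ind; destruct (E h); lra. Qed.

Lemma Fr_nonneg g (Hg : forall h, 0 <= g h) n : forall h, 0 <= Fr w h n g.
Proof.
  induction n; intro h; simpl; auto.
  pose proof (step_nonneg h true); pose proof (step_nonneg h false).
  pose proof (IHn (h ++ [nextpos (last h 0%Z) true])).
  pose proof (IHn (h ++ [nextpos (last h 0%Z) false])).
  apply Rplus_le_le_0_compat; apply Rmult_le_pos; auto.
Qed.

Lemma Fr_mono_g g1 g2 (Hg : forall h, g1 h <= g2 h) n : forall h, Fr w h n g1 <= Fr w h n g2.
Proof.
  induction n; intro h; simpl; auto.
  pose proof (step_nonneg h true); pose proof (step_nonneg h false).
  pose proof (IHn (h ++ [nextpos (last h 0%Z) true])).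
  pose proof (IHn (h ++ [nextpos (last h 0%Z) false])).
  apply Rplus_le_compat; apply Rmult_le_compat_l; auto.
Qed.

Lemma Fr_comp g n m : forall h, Fr w h (n + m) g = Fr w h n (fun h' => Fr w h' m g).
Proof. induction n; intro h; simpl; auto. rewrite !IHn. reflexivity. Qed.

Lemma Fr_zero g n : forall h, (forall l, g (h ++ l) = 0) -> Fr w h n g = 0.
Proof.
  induction n; intros h Hz; simpl.
  - rewrite <- (app_nil_r h). apply Hz.
  - rewrite !IHn. ring.
    all: intro l; rewrite <- app_assoc; apply Hz.
Qed.

Lemma Fr1_le E (HE : PC E) h : Fr w h 1 (ind E) <= ind E h.
Proof.
  cbn [Fr]. pose proof (step_nonneg h true); pose proof (step_nonneg h false).
  pose proof (step_sum h).
  unfold ind at 3. destruct (E h) eqn:Eh.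
  - pose proof (ind_bounds E (h ++ [nextpos (last h 0%Z) true])).
    pose proof (ind_bounds E (h ++ [nextpos (last h 0%Z) false])).
    assert (step w h true * ind E (h ++ [nextpos (last h 0%Z) true]) <= step w h true) by
      (rewrite <- (Rmult_1_r (step w h true)) at 2; apply Rmult_le_compat_l; lra).
    assert (step w h false * ind E (h ++ [nextpos (last h 0%Z) false]) <= step w h false) by
      (rewrite <- (Rmult_1_r (step w h false)) at 2; apply Rmult_le_compat_l; lra).
    lra.
  - unfold ind. destruct (E (h ++ _)) eqn:E1.
    + apply HE in E1. congruence.
    + destruct (E (h ++ [nextpos _ false])) eqn:E2.
      * apply HE in E2. congruence.
      * lra.
Qed.

Lemma Fr_mono_n E (HE : PC E) n h : Fr w h (S n) (ind E) <= Fr w h n (ind E).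
Proof.
  rewrite <- Nat.add_1_r, Fr_comp. apply Fr_mono_g. intro; apply Fr1_le; auto.
Qed.

Lemma Fr_mono_n2 E (HE : PC E) n n' h : (n <= n')%nat -> Fr w h n' (ind E) <= Fr w h n (ind E).
Proof.
  induction 1. lra. pose proof (Fr_mono_n E HE m h). lra.
Qed.

Lemma Fr_ge_path g (Hg : forall h, 0 <= g h) ds : forall hist m,
  pprob w hist ds * Fr w (hist ++ traj (last hist 0%Z) ds) m g <= Fr w hist (length ds + m) g.
Proof.
  induction ds as [|d t IH]; intros hist m.
  - cbn [pprob traj length Nat.add]. rewrite app_nil_r. lra.
  - cbn [pprob traj length Nat.add Fr]. set (x := last hist 0%Z).
    pose proof (IH (hist ++ [nextpos x d]) m) as IH'.
    rewrite last_last, <- app_assoc in IH'. cbn [app] in IH'.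
    pose proof (step_nonneg hist true); pose proof (step_nonneg hist false).
    pose proof (Fr_nonneg g Hg (length t + m) (hist ++ [nextpos x true])).
    pose proof (Fr_nonneg g Hg (length t + m) (hist ++ [nextpos x false])).
    destruct d.
    + rewrite Rmult_assoc.
      assert (step w hist false * Fr w (hist ++ [nextpos x false]) (length t + m) g >= 0)
        by (apply Rle_ge, Rmult_le_pos; auto).
      assert (step w hist true * (pprob w (hist ++ [nextpos x true]) t *
        Fr w (hist ++ nextpos x true :: traj (nextpos x true) t) m g) <=
        step w hist true * Fr w (hist ++ [nextpos x true]) (length t + m) g)
        by (apply Rmult_le_compat_l; auto). lra.
    + rewrite Rmult_assoc.
      assert (step w hist true * Fr w (hist ++ [nextpos x true]) (length t + m) g >= 0)
        by (apply Rle_ge, Rmult_le_pos; auto).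
      assert (step w hist false * (pprob w (hist ++ [nextpos x false]) t *
        Fr w (hist ++ nextpos x false :: traj (nextpos x false) t) m g) <=
        step w hist false * Fr w (hist ++ [nextpos x false]) (length t + m) g)
        by (apply Rmult_le_compat_l; auto). lra.
Qed.

Fixpoint sumR (l : list R) : R := match l with nil => 0 | a :: t => a + sumR t end.

Lemma sumR_fold l : fold_right Rplus 0 l = sumR l.
Proof. induction l; simpl; auto. Qed.

Lemma sumR_app l1 l2 : sumR (l1 ++ l2) = sumR l1 + sumR l2.
Proof. induction l1; simpl. lra. rewrite IHl1; lra. Qed.

Lemma sumR_scale {A} (f : A -> R) c l : sumR (map (fun x => c * f x) l) = c * sumR (map f l).
Proof. induction l; simpl. ring. rewrite IHl; ring. Qed.

Lemma G_eq (E : list Z -> bool) n : forall hist,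
  sumR (map (fun ds => if E (hist ++ traj (last hist 0%Z) ds) then pprob w hist ds else 0) (allds n))
  = Fr w hist n (ind E).
Proof.
  induction n; intro hist; simpl.
  - rewrite app_nil_r. unfold ind. ring.
  - rewrite map_app, sumR_app, !map_map.
    rewrite <- !IHn.
    rewrite <- !sumR_scale.
    f_equal; f_equal; apply map_ext; intro ds; simpl;
    rewrite last_last, <- app_assoc; simpl;
    destruct (E _); ring.
Qed.

Lemma prob_first_Fr n (E : list Z -> bool) : prob_first w n E = Fr w [0%Z] n (ind E).
Proof.
  unfold prob_first. rewrite sumR_fold, <- G_eq. reflexivity.
Qed.


Lemma pig (phi : list Z -> nat -> R)
  (Hnn : forall h m, 0 <= phi h m) (Hmono : forall h m, phi h (S m) <= phi h m) :
  forall n hist eps, 0 < eps -> (forall m, eps <= Fr w hist n (fun h => phi h m)) ->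
  exists ds c, length ds = n /\ 0 < c /\ forall m, c <= phi (hist ++ traj (last hist 0%Z) ds) m.
Proof.
  assert (Hm2 : forall h m1 m2, (m1 <= m2)%nat -> phi h m2 <= phi h m1).
  { intros h m1 m2 Hle; induction Hle. lra. pose proof (Hmono h m). lra. }
  induction n as [|n IH]; intros hist eps Heps H.
  - exists nil, eps. simpl. rewrite app_nil_r. split; auto.
  - set (x := last hist 0%Z) in *.
    set (A := fun m => Fr w (hist ++ [nextpos x true]) n (fun h => phi h m)).
    set (B := fun m => Fr w (hist ++ [nextpos x false]) n (fun h => phi h m)).
    assert (HA : forall m1 m2, (m1 <= m2)%nat -> A m2 <= A m1).
    { intros; unfold A; apply Fr_mono_g; intros; apply Hm2; auto. }
    assert (HB : forall m1 m2, (m1 <= m2)%nat -> B m2 <= B m1).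
    { intros; unfold B; apply Fr_mono_g; intros; apply Hm2; auto. }
    assert (Hsplit : forall m, eps <= step w hist true * A m + step w hist false * B m).
    { intro m; apply H. }
    pose proof (step_nonneg hist true); pose proof (step_nonneg hist false).
    pose proof (step_sum hist).
    assert (Hcase : (forall m, eps / 2 <= A m) \/ (forall m, eps / 2 <= B m)).
    { destruct (classic (forall m, eps / 2 <= A m)) as [|HnA]; [left; auto|right].
      apply not_all_ex_not in HnA. destruct HnA as [m1 Hm1].
      intro m2. destruct (Rle_lt_dec (eps/2) (B m2)) as [|Hm2']; auto.
      exfalso. set (m := Nat.max m1 m2).
      pose proof (HA m1 m (Nat.le_max_l _ _)). pose proof (HB m2 m (Nat.le_max_r _ _)).
      pose proof (Hsplit m).
      assert (step w hist true * A m <= step w hist true * (eps/2)) by (apply Rmult_le_compat_l; lra).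
      assert (step w hist false * B m <= step w hist false * (eps/2)) by (apply Rmult_le_compat_l; lra).
      nra. }
    destruct Hcase as [Hc|Hc].
    + destruct (IH (hist ++ [nextpos x true]) (eps/2)) as [ds [c [G1 [G2 G3]]]]; [lra|exact Hc|].
      exists (true :: ds), c. split; [simpl; auto|split; auto].
      intro m. specialize (G3 m). rewrite last_last, <- app_assoc in G3. exact G3.
    + destruct (IH (hist ++ [nextpos x false]) (eps/2)) as [ds [c [G1 [G2 G3]]]]; [lra|exact Hc|].
      exists (false :: ds), c. split; [simpl; auto|split; auto].
      intro m. specialize (G3 m). rewrite last_last, <- app_assoc in G3. exact G3.
Qed.

End S.

Lemma cnt_app z l1 l2 : cnt z (l1 ++ l2) = (cnt z l1 + cnt z l2)%nat.
Proof. induction l1; simpl; auto. rewrite IHl1. lia. Qed.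

Section Sim.
Variable ws : nat -> R.
Variables w1 w2 : env.
Hypothesis w1pos : forall k x, 0 < w1 k x.
Hypothesis w2pos : forall k x, 0 < w2 k x.
Variables sg s : Z.
Hypothesis Hsg : sg = 1%Z \/ sg = (-1)%Z.
Hypothesis Hs : (0 <= s)%Z.
Hypothesis Hw1 : forall k z, (0 <= sg * z)%Z -> w1 k z = ws k.
Hypothesis Hw2 : forall k z, (s <= z)%Z -> w2 k z = ws k.
Variables E1 E2 : list Z -> bool.
Variable L : nat.
Hypothesis P1 : PC E1.
Hypothesis P2 : forall h, (L <= length h)%nat -> E1 (h ++ [0%Z]) = false.
Hypothesis P3 : forall H A, (1 <= length H)%nat -> (0 < A)%Z -> E2 H = true -> E2 (H ++ [A]) = true.

Definition Inv h H :=
  (1 <= sg * last h 0)%Z /\ last H 0%Z = (s + sg * last h 0)%Z /\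
  (forall z, (0 <= sg * z)%Z -> cnt z h = cnt (s + sg * z)%Z H) /\
  (L <= length h)%nat /\ (1 <= length H)%nat /\ (E1 h = true -> E2 H = true).

Definition dd (d : bool) := if Z.eqb sg 1 then d else negb d.

Lemma step_rel h H d : Inv h H -> step w1 h d = step w2 H (dd d).
Proof.
  intros [I1 [I2 [I3 _]]]. unfold step, dd. rewrite I2.
  set (x := last h 0%Z) in *.
  destruct Hsg; subst sg; cbv [Z.eqb Pos.eqb negb].
  - rewrite !Hw1 by lia. rewrite !Hw2 by lia.
    replace (s + 1 * x + 1)%Z with (s + 1 * (x+1))%Z by lia.
    replace (s + 1 * x - 1)%Z with (s + 1 * (x-1))%Z by lia.
    rewrite <- !I3 by lia. reflexivity.
  - rewrite !Hw1 by lia. rewrite !Hw2 by lia.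
    replace (s + -1 * x + 1)%Z with (s + -1 * (x-1))%Z by lia.
    replace (s + -1 * x - 1)%Z with (s + -1 * (x+1))%Z by lia.
    rewrite <- !I3 by lia. destruct d; simpl; rewrite Rplus_comm; reflexivity.
Qed.

Lemma next_rel h H d : Inv h H ->
  nextpos (last H 0%Z) (dd d) = (s + sg * nextpos (last h 0%Z) d)%Z.
Proof.
  intros [I1 [I2 _]]. rewrite I2. unfold dd.
  destruct Hsg; subst sg; destruct d; cbv [Z.eqb Pos.eqb negb nextpos]; lia.
Qed.

Lemma sim m : forall h H, Inv h H -> Fr w1 h m (ind E1) <= Fr w2 H m (ind E2).
Proof.
  induction m as [|m IH]; intros h H HI.
  - cbn [Fr]. unfold ind. destruct HI as [_ [_ [_ [_ [_ I6]]]]].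
    destruct (E1 h); [rewrite I6 by auto|destruct (E2 H)]; lra.
  - assert (Hchild : forall d, Fr w1 (h ++ [nextpos (last h 0%Z) d]) m (ind E1) <=
                               Fr w2 (H ++ [nextpos (last H 0%Z) (dd d)]) m (ind E2)).
    { intro d. pose proof HI as [I1 [I2 [I3 [I4 [I5 I6]]]]].
      set (a := nextpos (last h 0%Z) d).
      destruct (Z.eq_dec a 0) as [Ha|Ha].
      - rewrite Fr_zero; auto.
        + apply Fr_nonneg; auto. intro; apply ind_bounds.
        + intro l. unfold ind. rewrite Ha.
          destruct (E1 ((h ++ [0%Z]) ++ l)) eqn:E; auto.
          apply P1 in E. rewrite P2 in E; auto. discriminate.
      - apply IH. rewrite (next_rel h H d HI). fold a.
        assert (1 <= sg * a)%Z.
        { unfold a in *; destruct Hsg as [Hq|Hq]; rewrite Hq in I1 |- *; destruct d; cbv [nextpos] in *; lia. }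
        repeat split.
        + rewrite last_last. lia.
        + rewrite !last_last. auto.
        + intros z Hz. rewrite !cnt_app, <- I3 by auto. simpl.
          destruct (Z.eq_dec a z); destruct (Z.eq_dec (s + sg * a) (s + sg * z)); try lia.
        + rewrite length_app; simpl; lia.
        + rewrite length_app; simpl; lia.
        + intro E. apply P1 in E. apply P3; auto. lia. }
    cbn [Fr].
    rewrite !(step_rel h H _ HI).
    pose proof (Hchild true). pose proof (Hchild false).
    pose proof (step_nonneg w2 w2pos H (dd true)). pose proof (step_nonneg w2 w2pos H (dd false)).
    unfold dd in *. destruct (Z.eqb sg 1); simpl in *.
    + apply Rplus_le_compat; apply Rmult_le_compat_l; auto.
    + rewrite Rplus_comm. apply Rplus_le_compat; apply Rmult_le_compat_l; auto.
Qed.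
End Sim.

Lemma PC_avoid N : PC (avoid0_from N).
Proof.
  intros h l H. unfold avoid0_from in *. rewrite skipn_app, forallb_app in H.
  apply andb_prop in H. tauto.
Qed.

Lemma P2_avoid N h : (N <= length h)%nat -> avoid0_from N (h ++ [0%Z]) = false.
Proof.
  intro Hl. unfold avoid0_from. rewrite skipn_app, forallb_app.
  replace (N - length h)%nat with 0%nat by lia. simpl. destruct (forallb _ _); reflexivity.
Qed.

Lemma P3_avoid1 H A : (1 <= length H)%nat -> (0 < A)%Z -> avoid0_from 1 H = true ->
  avoid0_from 1 (H ++ [A]) = true.
Proof.
  intros Hl HA HH. unfold avoid0_from in *. rewrite skipn_app, forallb_app, HH.
  replace (1 - length H)%nat with 0%nat by lia. simpl.
  destruct (Z.eqb_spec A 0); [lia|reflexivity].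
Qed.

Lemma PC_pos : PC positive_after0.
Proof.
  intros h l H. destruct h as [|a t]; [reflexivity|].
  unfold positive_after0 in *. simpl in *. rewrite forallb_app in H.
  apply andb_prop in H. tauto.
Qed.

Lemma P2_pos h : (1 <= length h)%nat -> positive_after0 (h ++ [0%Z]) = false.
Proof.
  intro Hl. destruct h as [|a t]; [simpl in Hl; lia|].
  unfold positive_after0. simpl. rewrite forallb_app. simpl. destruct (forallb _ _); reflexivity.
Qed.

Lemma P3_pos H A : (1 <= length H)%nat -> (0 < A)%Z -> positive_after0 H = true ->
  positive_after0 (H ++ [A]) = true.
Proof.
  intros Hl HA HH. destruct H as [|a t]; [simpl in Hl; lia|].
  unfold positive_after0 in *. simpl in *. rewrite forallb_app, HH. simpl.
  destruct (Z.ltb_spec 0 A); [reflexivity|lia].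
Qed.

Lemma pprob_pos w (wpos : forall k x, 0 < w k x) ds : forall h, 0 < pprob w h ds.
Proof.
  induction ds; intro h; simpl. lra.
  apply Rmult_lt_0_compat; [apply step_pos; auto|apply IHds].
Qed.

Lemma length_traj ds : forall x, length (traj x ds) = length ds.
Proof. induction ds; intro x; simpl; auto. Qed.

Lemma skipn_last N : forall (l : list Z) d, length l = S N -> skipn N l = [last l d].
Proof.
  induction N; intros l d Hl.
  - destruct l as [|a [|b t]]; simpl in *; try lia. reflexivity.
  - destruct l as [|a t]; simpl in Hl; [lia|].
    simpl. rewrite (IHN t d) by lia. destruct t; simpl in Hl; [lia|reflexivity].
Qed.

Definition fold (z : Z) : Z := if Z.leb 0 z then (3 + z)%Z else (1 + z mod 2)%Z.

Lemma fold_step z z' : (z' = z + 1 \/ z' = z - 1)%Z -> (fold z' = fold z + 1 \/ fold z' = fold z - 1)%Z.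
Proof.
  intro H. unfold fold.
  pose proof (Z.mod_pos_bound z 2 ltac:(lia)). pose proof (Z.mod_pos_bound z' 2 ltac:(lia)).
  pose proof (Z_div_mod_eq_full z 2). pose proof (Z_div_mod_eq_full z' 2).
  destruct (Z.leb_spec 0 z), (Z.leb_spec 0 z'); lia.
Qed.

Lemma fold_ge1 z : (1 <= fold z)%Z.
Proof. unfold fold. pose proof (Z.mod_pos_bound z 2 ltac:(lia)). destruct (Z.leb_spec 0 z); lia. Qed.

Lemma cnt_map (f : Z -> Z) z (Hf : forall y, f y = f z -> y = z) l :
  cnt (f z) (map f l) = cnt z l.
Proof.
  induction l; simpl; auto. rewrite IHl.
  destruct (Z.eq_dec (f a) (f z)), (Z.eq_dec a z); subst; auto.
  - apply Hf in e. contradiction.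
  - contradiction.
Qed.

Lemma realize (sg : Z) (Hsg : sg = 1%Z \/ sg = (-1)%Z) ds : forall x,
  exists ds', length ds' = length ds /\
    traj (fold (sg * x)) ds' = map (fun y => fold (sg * y)) (traj x ds).
Proof.
  induction ds as [|d t IH]; intro x.
  - exists nil; auto.
  - set (a := nextpos x d).
    assert (Hst : (fold (sg * a) = fold (sg * x) + 1 \/ fold (sg * a) = fold (sg * x) - 1)%Z).
    { apply fold_step. unfold a; destruct Hsg as [->| ->]; destruct d; cbv [nextpos]; lia. }
    destruct (IH a) as [t' [Ht1 Ht2]].
    destruct Hst as [Hst|Hst].
    + exists (true :: t'). split; simpl; [lia|]. fold a. rewrite <- Hst, Ht2. reflexivity.
    + exists (false :: t'). split; simpl; [lia|]. fold a. rewrite <- Hst, Ht2. reflexivity.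
Qed.

Lemma last_map_app (f : Z -> Z) l1 h d :
  h <> nil -> last (l1 ++ map f h) d = f (last h 0%Z).
Proof.
  intro Hh. rewrite (app_removelast_last 0%Z Hh) at 1.
  rewrite map_app, app_assoc. simpl. apply last_last.
Qed.

Lemma part2 (ws : nat -> R) (hws : forall k, 0 < ws k) :
  (exists (N : nat) (eps : R), 0 < eps /\
     forall M : nat, eps <= prob_first (const_env ws) M (avoid0_from N)) ->
  exists eps : R, 0 < eps /\
     forall n : nat, eps <= prob_first (const_env ws) n positive_after0.
Proof.
  intros [N [eps [Heps Hyp]]].
  set (c := const_env ws).
  assert (cpos : forall k x, 0 < c k x) by (intros; apply hws).
  assert (H1 : forall m, eps <= Fr c [0%Z] N (fun h => Fr c h m (ind (avoid0_from N)))).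
  { intro m. rewrite <- Fr_comp, <- prob_first_Fr; auto. }
  destruct (pig c cpos (fun h m => Fr c h m (ind (avoid0_from N)))
              (fun h m => Fr_nonneg c cpos _ (fun h => proj1 (ind_bounds (avoid0_from N) h)) m h)
              (fun h m => Fr_mono_n c cpos _ (PC_avoid N) m h)
              N [0%Z] eps Heps H1) as [ds [c0 [Hlen [Hc0 Hall]]]].
  simpl in Hall.
  set (h := (0%Z :: traj 0 ds)) in *.
  assert (Hav : avoid0_from N h = true).
  { specialize (Hall 0%nat). simpl in Hall. unfold ind in Hall.
    destruct (avoid0_from N h); auto. lra. }
  assert (Hlh : length h = S N) by (unfold h; simpl; rewrite length_traj; auto).
  set (x0 := last h 0%Z).
  assert (Hx0 : x0 <> 0%Z).
  { unfold avoid0_from in Hav. rewrite (skipn_last N h 0%Z Hlh) in Hav.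
    change ((negb (Z.eqb x0 0) && true)%bool = true) in Hav. apply Z.eqb_neq. destruct (Z.eqb x0 0); [discriminate|reflexivity]. }
  set (sg := if Z.ltb 0 x0 then 1%Z else (-1)%Z).
  assert (Hsg : sg = 1%Z \/ sg = (-1)%Z) by (unfold sg; destruct (Z.ltb 0 x0); auto).
  assert (Hsx : (1 <= sg * x0)%Z) by (unfold sg; destruct (Z.ltb_spec 0 x0); lia).
  set (F := fun y => fold (sg * y)).
  destruct (realize sg Hsg ds 0%Z) as [ds' [Hl' Ht']].
  assert (F0 : fold (sg * 0) = 3%Z) by (rewrite Z.mul_0_r; reflexivity).
  rewrite F0 in Ht'.
  set (dsF := true :: true :: true :: ds').
  set (H := [0%Z; 1%Z; 2%Z] ++ map F h).
  assert (HtF : [0%Z] ++ traj 0 dsF = H).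
  { unfold H, dsF, h. change (traj 0 (true::true::true::ds')) with (1%Z :: 2%Z :: 3%Z :: traj 3 ds'). rewrite Ht'. unfold F. cbn [map app]. rewrite F0. reflexivity. }
  assert (Hsim : forall n, Fr c h n (ind (avoid0_from N)) <= Fr c H n (ind positive_after0)).
  { intro n. apply (sim ws c c cpos sg 3 Hsg ltac:(lia) (fun _ _ _ => eq_refl)
                       (fun _ _ _ => eq_refl) _ _ N (PC_avoid N) (P2_avoid N) P3_pos).
    assert (Hhnil : h <> nil) by discriminate.
    repeat split.
    - fold x0. exact Hsx.
    - unfold H. rewrite last_map_app by auto. unfold F. fold x0.
      unfold fold. destruct (Z.leb_spec 0 (sg * x0)); lia.
    - intros z Hz. unfold H. rewrite cnt_app.
      assert (H0 : cnt (3 + sg * z)%Z [0%Z; 1%Z; 2%Z] = 0%nat).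
      { cbn [cnt]. destruct (Z.eq_dec 0 (3 + sg * z)), (Z.eq_dec 1 (3 + sg * z)), (Z.eq_dec 2 (3 + sg * z)); lia. }
      rewrite H0.
      replace (3 + sg * z)%Z with (F z) by (unfold F, fold; destruct (Z.leb_spec 0 (sg * z)); lia).
      rewrite cnt_map; [reflexivity|].
      + intros y Hy. unfold F, fold in Hy.
        pose proof (Z.mod_pos_bound (sg * y) 2 ltac:(lia)).
        destruct (Z.leb_spec 0 (sg * y)), (Z.leb_spec 0 (sg * z)); try lia.
    - lia.
    - unfold H; simpl; lia.
    - intros _. unfold H, positive_after0. cbn [tl app].
      apply (proj2 (forallb_forall _ _)). intros y Hy.
      destruct Hy as [<-|[<-|Hy]]; [reflexivity|reflexivity|].
      apply in_map_iff in Hy.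
      destruct Hy as [y' [<- _]]. unfold F. pose proof (fold_ge1 (sg * y')).
      destruct (Z.ltb_spec 0 (fold (sg * y'))); [reflexivity|lia]. }
  set (p := pprob c [0%Z] dsF).
  assert (Hp : 0 < p) by (apply pprob_pos; auto).
  exists (p * c0). split; [apply Rmult_lt_0_compat; auto|].
  intro n. rewrite prob_first_Fr.
  pose proof (Fr_mono_n2 c cpos _ PC_pos n (3 + N + n) [0%Z] ltac:(lia)).
  pose proof (Fr_ge_path c cpos (ind positive_after0) (fun h => proj1 (ind_bounds positive_after0 h)) dsF [0%Z] n) as Hg.
  replace (length dsF) with (3 + N)%nat in Hg by (unfold dsF; simpl; lia).
  simpl last in Hg. rewrite HtF in Hg.
  pose proof (Hsim n). pose proof (Hall n).
  assert (p * c0 <= p * Fr c H n (ind positive_after0)) by (apply Rmult_le_compat_l; lra).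
  fold p in Hg. lra.
Qed.

Theorem lemma2p1 (ws : nat -> R) (hws : forall k, 0 < ws k) :
  (exists (N : nat) (eps : R), 0 < eps /\
     forall M : nat, eps <= prob_first (const_env ws) M (avoid0_from N)) ->
  (forall w : env,
     (forall k x, 0 < w k x) ->
     (forall k x, (0 <= x)%Z -> w k x = ws k) ->
     exists eps : R, 0 < eps /\
       forall n : nat, eps <= prob_first w n (avoid0_from 1))
  /\
  (exists eps : R, 0 < eps /\
     forall n : nat, eps <= prob_first (const_env ws) n positive_after0).
Proof.
  intro Hyp. pose proof (part2 ws hws Hyp) as [c2 [Hc2 Hall]].
  split; [|exists c2; auto].
  intros w wpos Hw.
  set (c := const_env ws).
  assert (cpos : forall k x, 0 < c k x) by (intros; apply hws).
  assert (HF1 : forall n, c2 <= Fr c [0%Z; 1%Z] n (ind positive_after0)).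
  { intro n. specialize (Hall (S n)). rewrite prob_first_Fr in Hall. cbn [Fr] in Hall.
    rewrite (Fr_zero c _ n ([0%Z] ++ [nextpos (last [0%Z] 0%Z) false])) in Hall.
    2: { intro l. reflexivity. }
    pose proof (step_nonneg c cpos [0%Z] true). pose proof (step_nonneg c cpos [0%Z] false).
    pose proof (step_sum c cpos [0%Z]).
    pose proof (Fr_nonneg c cpos _ (fun h => proj1 (ind_bounds positive_after0 h)) n [0%Z; 1%Z]).
    change ([0%Z] ++ [nextpos (last [0%Z] 0%Z) true]) with [0%Z; 1%Z] in Hall.
    assert (step c [0%Z] true * Fr c [0%Z; 1%Z] n (ind positive_after0) <= Fr c [0%Z; 1%Z] n (ind positive_after0)).
    { rewrite <- (Rmult_1_l (Fr c [0%Z; 1%Z] n _)) at 2. apply Rmult_le_compat_r; lra. }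
    fold c in Hall. lra. }
  assert (Hsim : forall n, Fr c [0%Z; 1%Z] n (ind positive_after0) <= Fr w [0%Z; 1%Z] n (ind (avoid0_from 1))).
  { intro n. apply (sim ws c w wpos 1 0 ltac:(auto) ltac:(lia) (fun _ _ _ => eq_refl) Hw
                       _ _ 1 PC_pos P2_pos P3_avoid1).
    repeat split; [change (1 <= 1 * 1)%Z; lia | | simpl; lia | simpl; lia].
    intros z Hz. replace (0 + 1 * z)%Z with z by lia. reflexivity. }
  set (st := step w [0%Z] true).
  assert (Hst : 0 < st) by (apply step_pos; auto).
  exists (st * c2). split; [apply Rmult_lt_0_compat; auto|].
  intro n. rewrite prob_first_Fr.
  pose proof (Fr_mono_n w wpos _ (PC_avoid 1) n [0%Z]) as Hm.
  cbn [Fr] in Hm.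
  change ([0%Z] ++ [nextpos (last [0%Z] 0%Z) true]) with [0%Z; 1%Z] in Hm.
  pose proof (step_nonneg w wpos [0%Z] false).
  pose proof (Fr_nonneg w wpos _ (fun h => proj1 (ind_bounds (avoid0_from 1) h)) n
               ([0%Z] ++ [nextpos (last [0%Z] 0%Z) false])).
  pose proof (HF1 n). pose proof (Hsim n).
  assert (st * c2 <= st * Fr w [0%Z; 1%Z] n (ind (avoid0_from 1))) by (apply Rmult_le_compat_l; lra).
  assert (0 <= step w [0%Z] false * Fr w ([0%Z] ++ [nextpos (last [0%Z] 0%Z) false]) n (ind (avoid0_from 1)))
    by (apply Rmult_le_pos; auto).
  fold st in Hm. lra.
Qed.
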